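(* Let $E$ be a real Banach space, $K\subset E$ nonempty closed convex, $Y$ a real Banach space containing a closed, convex, pointed cone $C$ with nonempty interior, $f:E\times E\to Y$, $T:K\to\mathcal P(K)$, and $g\in\mathcal F$ satisfying H1–H4, with B1–B4 holding. Suppose $\{x^k\}$, $\{v^k\}$ and $\{w^k\}$ are the (infinite) sequences generated by Algorithm SEML. If these sequences are bounded, then $$\lim_{k\to\infty}\|v^{k+1}-v^k\|=\lim_{k\to\infty}\|v^k-x^k\|=\lim_{k\to\infty}\|x^k-w^k\|=0.$$
   Context: $C^+=\{z\in Y^*:\langle y,z\rangle\ge0\ \forall y\in C\}$; $y\preceq y'$ iff $y'-y\in C$; $C$-convex: $G(tx+(1-t)y)\preceq tG(x)+(1-t)G(y)$. $\mathcal F$: functions $g:E\to\mathbb R$ strictly convex, lower semicontinuous, Gâteaux differentiable with derivative $g'$. $D_g(x,y)=g(x)-g(y)-\langle x-y,g'(y)\rangle$; $v_g(x,t)=\inf\{D_g(y,x):\|y-x\|=t\}$. H1: level sets of $D_g(x,\cdot)$ bounded; H2: $\inf_{x\in A}v_g(x,t)>0$ for $t>0$, bounded $A$; H3: $g'$ uniformly continuous on bounded sets; H4: $\lim_{\|x\|\to\infty}(g(x)-\rho\|x-z\|)=\infty$ for all $z$, $\rho>0$. $\Pi^g_D(x)$: unique minimizer of $D_g(\cdot,x)$ over nonempty closed convex $D$. B1: $f(x,x)=0$. B2: $f$ uniformly continuous on bounded subsets of $E\times E$. B3: $f(x,\cdot)$ $C$-convex. B4: $T$ has nonempty closed convex values,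 is demiclosed ($x^k\rightharpoonup\bar x$, $d(x^k,T(x^k))\to0\Rightarrow\bar x\in T(\bar x)$), lower semicontinuous at each $\bar x\in K$ ($x^k\to\bar x$, $\bar y\in T(\bar x)\Rightarrow\exists y^k\in T(x^k)$, $y^k\to\bar y$), quasi $D_g$-nonexpansive ($S(x)=\Pi^g_{T(x)}(x)$ has a fixed point and $D_g(p,S(x))\le D_g(p,x)$ for all fixed points $p$ of $S$ and $x\in K$). $\mathrm{argmin}^C_w\{G(y):y\in Q\}$: $a\in Q$ with no $y\in Q$ such that $G(a)-G(y)\in\mathrm{int}(C)$. Algorithm SEML: parameters $v^0\in K$, $\delta,\theta\in(0,1)$, $\{\beta_k\}\subset[\hat\beta,\tilde\beta]$ with $0<\hat\beta\le\tilde\beta$, $\{\gamma_k\}\subset[\varepsilon,1]$, $\varepsilon\in(0,1]$, $\{e^k\}\subset\mathrm{int}(C)$, $e^k\to\bar e\in\mathrm{int}(C)$. Given $v^k$: $x^k=\Pi^g_{T(v^k)}(v^k)$; $z^k\in\mathrm{argmin}^C_w\{\beta_kf(x^k,y)+g(y)e^k-\langle y,g'(x^k)\rangle e^k:y\in T(v^k)\}$; stop if $z^k=v^k$; else $\ell(k)=\min\{\ell\ge0:-\beta_kf(y^\ell,x^k)+\beta_kf(y^\ell,z^k)+\delta D_g(z^k,x^k)e^k\notin\mathrm{int}(C)\}$, $y^\ell=\theta^\ell z^k+(1-\theta^\ell)x^k$; $\alpha_k=\theta^{\ell(k)}$; $y^k=\alpha_kz^k+(1-\alpha_k)x^k$;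 $H_k=\{y:f(y^k,y)\in-C\}$; $K_0=K\cap H_0$, $K_k=K_{k-1}\cap H_k$; $w^k=\Pi^g_{K_k}(x^k)$; $v^{k+1}=\Pi^g_{L_k\cap M_k\cap N_k}(v^0)$ with $L_k=\{z:\langle z-x^k,g'(x^k)-g'(w^k)\rangle\le-\gamma_kD_g(x^k,w^k)\}$, $M_k=\{z:\langle z-v^k,g'(v^k)-g'(x^k)\rangle\le-\gamma_kD_g(v^k,x^k)\}$, $N_k=\{z:\langle z-v^k,g'(v^0)-g'(v^k)\rangle\le0\}$. *)

(* Defs.v *)
From HB Require Import structures.
From mathcomp Require Import all_boot all_order all_algebra.
From mathcomp Require Import all_classical all_reals all_analysis.
Set Implicit Arguments. Unset Strict Implicit. Unset Printing Implicit Defensive.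
Import Order.TTheory GRing.Theory Num.Theory.
Import numFieldNormedType.Exports.
Local Open Scope classical_set_scope.
Local Open Scope ring_scope.

Section SEMLDefs.
Context {R : realType}.

Definition bdd_set {V : normedModType R} (A : set V) : Prop :=
  exists M : R, forall a, A a -> `|a| <= M.

Definition bdd_seq {V : normedModType R} (u : nat -> V) : Prop :=
  exists M : R, forall k, `|u k| <= M.

Definition cvx_set {V : normedModType R} (A : set V) : Prop :=
  forall a b (t : R), A a -> A b -> 0 <= t <= 1 -> A (t *: a + (1 - t) *: b).

Definition is_dual_elem {V : normedModType R} (phi : V -> R) : Prop :=
  (forall (a : R) u w, phi (a *: u + w) = a * phi u + phi w) /\ continuous phi.

Definition weak_cvg {V : normedModType R} (u : nat -> V) (xb : V) : Prop :=
  forall phi : V -> R, is_dual_elem phi -> (fun k => phi (u k)) @ \oo --> phi xb.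

Definition good_cone {Y : normedModType R} (C : set Y) : Prop :=
  [/\ (forall c (l : R), C c -> 0 <= l -> C (l *: c)),
      cvx_set C, closed C,
      (forall c, C c -> C (- c) -> c = 0)
    & exists c, (interior C) c].

Definition cle {Y : normedModType R} (C : set Y) (a b : Y) : Prop := C (b - a).

Definition C_convex {E Y : normedModType R} (C : set Y) (G : E -> Y) : Prop :=
  forall a b (t : R), 0 <= t <= 1 ->
    cle C (G (t *: a + (1 - t) *: b)) (t *: G a + (1 - t) *: G b).

Definition wargmin {E Y : normedModType R} (C : set Y) (G : E -> Y) (Q : set E) (a : E)
  : Prop :=
  Q a /\ ~ (exists b, Q b /\ (interior C) (G a - G b)).

Section Bregman.
Context {E : normedModType R}.
Variables (g : E -> R) (g' : E -> E -> R).
(* g' a is the Gateaux derivative g'(a) ∈ E^*, and ⟨u, g'(a)⟩ = g' a u *)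

Definition Dg (a b : E) : R := g a - g b - g' b (a - b).

(* p = Π^g_D(a) : p is the minimizer of D_g(·,a) over D
   (the minimizer is unique for g ∈ F, D nonempty closed convex) *)
Definition is_proj (D : set E) (a p : E) : Prop :=
  D p /\ forall b, D b -> Dg p a <= Dg b a.

Definition class_F : Prop :=
  [/\
      (forall a b (t : R), a <> b -> 0 < t < 1 ->
         g (t *: a + (1 - t) *: b) < t * g a + (1 - t) * g b),
      (forall a (eps : R), 0 < eps -> \forall b \near a, g a - eps < g b),
      (forall a, is_dual_elem (g' a))
    &
      (forall a h, (fun t : R => t^-1 * (g (a + t *: h) - g a)) @ (0 : R)^' --> g' a h)].

Definition H1 : Prop := forall a (r : R), bdd_set [set b | Dg a b <= r].

(* H2: inf_{a∈A} v_g(a,t) > 0 for bounded A and t > 0, where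
   v_g(a,t) = inf {D_g(b,a) : ‖b - a‖ = t}; written out: a positive lower bound *)
Definition H2 : Prop :=
  forall (A : set E) (t : R), bdd_set A -> 0 < t ->
    exists c : R, 0 < c /\
      forall a b, A a -> `|b - a| = t -> c <= Dg b a.

(* H3: g' : E -> E^* uniformly continuous on bounded sets (dual norm) *)
Definition H3 : Prop :=
  forall (A : set E), bdd_set A -> forall eps : R, 0 < eps ->
    exists del : R, 0 < del /\
      forall a b, A a -> A b -> `|a - b| < del ->
        forall u, `|u| <= 1 -> `|g' a u - g' b u| <= eps.

Definition H4 : Prop :=
  forall (z : E) (rho : R), 0 < rho -> forall M : R,
    exists N : R, forall a, N <= `|a| -> M <= g a - rho * `|a - z|.

End Bregman.

Section Bifun.
Context {E Y : normedModType R}.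

Definition B1 (f : E -> E -> Y) : Prop := forall a, f a a = 0.

Definition B2 (f : E -> E -> Y) : Prop :=
  forall (A : set E), bdd_set A -> forall eps : R, 0 < eps ->
    exists del : R, 0 < del /\
      forall a1 b1 a2 b2, A a1 -> A b1 -> A a2 -> A b2 ->
        `|a1 - a2| < del -> `|b1 - b2| < del -> `|f a1 b1 - f a2 b2| < eps.

Definition B3 (C : set Y) (f : E -> E -> Y) : Prop := forall a, C_convex C (f a).
End Bifun.

Section Tmap.
Context {E : normedModType R}.
Variables (K : set E) (T : E -> set E) (g : E -> R) (g' : E -> E -> R).

(* fixed point of S(a) = Π^g_{T(a)}(a) *)
Definition S_fixed (p : E) : Prop := K p /\ is_proj g g' (T p) p p.

(* B4 ; T : K -> P(K) is modelled as T : E -> set E, only used on K *)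
Definition B4 : Prop :=
  [/\
      (forall a, K a -> [/\ T a `<=` K, T a !=set0, closed (T a) & cvx_set (T a)]),
      (forall (u : nat -> E) xb, (forall k, K (u k)) -> weak_cvg u xb ->
         (forall eps : R, 0 < eps ->
            \forall k \near \oo, exists b, T (u k) b /\ `|u k - b| < eps) ->
         T xb xb),
      (forall (u : nat -> E) xb yb, K xb -> (forall k, K (u k)) -> u @ \oo --> xb ->
         T xb yb ->
         exists yy : nat -> E, (forall k, T (u k) (yy k)) /\ yy @ \oo --> yb)
    &
      ((exists p, S_fixed p) /\
       forall p a s, S_fixed p -> K a -> is_proj g g' (T a) a s ->
         Dg g g' p s <= Dg g g' p a)].
End Tmap.

Section Alg.
Context {E Y : normedModType R}.
Variables (K : set E) (C : set Y) (f : E -> E -> Y) (T : E -> set E)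
  (g : E -> R) (g' : E -> E -> R).

Definition SEML_params (delta theta betahat betatil epsi : R) (beta gamma : nat -> R)
  (e : nat -> Y) (ebar : Y) : Prop :=
  [/\ 0 < delta < 1, 0 < theta < 1,
      0 < betahat <= betatil /\ (forall k, betahat <= beta k <= betatil),
      0 < epsi <= 1 /\ (forall k, epsi <= gamma k <= 1)
    & [/\ forall k, (interior C) (e k), e @ \oo --> ebar & (interior C) ebar]].

Definition ls_cond (delta theta : R) (beta : nat -> R) (e : nat -> Y)
  (x z : nat -> E) (k l : nat) : Prop :=
  let yl := theta ^+ l *: z k + (1 - theta ^+ l) *: x k in
  ~ (interior C) (- (beta k *: f yl (x k)) + beta k *: f yl (z k)
                  + (delta * Dg g g' (z k) (x k)) *: e k).

Definition Hset (y : nat -> E) (j : nat) : set E := [set u | C (- f (y j) u)].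

Definition Kset (y : nat -> E) (k : nat) : set E :=
  [set u | K u /\ forall j, (j <= k)%N -> Hset y j u].

Definition Lset (gamma : nat -> R) (x w : nat -> E) (k : nat) : set E :=
  [set u | g' (x k) (u - x k) - g' (w k) (u - x k) <= - (gamma k * Dg g g' (x k) (w k))].

Definition Mset (gamma : nat -> R) (x v : nat -> E) (k : nat) : set E :=
  [set u | g' (v k) (u - v k) - g' (x k) (u - v k) <= - (gamma k * Dg g g' (v k) (x k))].

Definition Nset (v : nat -> E) (k : nat) : set E :=
  [set u | g' (v 0%N) (u - v k) - g' (v k) (u - v k) <= 0].

(* (x,z,ell,y,w,v) are the infinite sequences generated by SEML from v 0 = v^0 ∈ K;
   ell k = ℓ(k), alpha_k = theta^ell(k) *)
Definition SEML_seq (delta theta : R) (beta gamma : nat -> R) (e : nat -> Y)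
  (x z y w v : nat -> E) (ell : nat -> nat) : Prop :=
  K (v 0%N) /\
  forall k,
  [/\ K (v k) (* T(v^k) must be defined *),
      is_proj g g' (T (v k)) (v k) (x k),
      wargmin C (fun u => beta k *: f (x k) u + (g u - g' (x k) u) *: e k) (T (v k)) (z k),
      z k <> v k (* the algorithm does not stop *)
    & ls_cond delta theta beta e x z k (ell k) /\
        (forall l, (l < ell k)%N -> ~ ls_cond delta theta beta e x z k l)] /\
  [/\ y k = theta ^+ ell k *: z k + (1 - theta ^+ ell k) *: x k,
      is_proj g g' (Kset y k) (x k) (w k)
    & is_proj g g' (Lset gamma x w k `&` Mset gamma x v k `&` Nset v k) (v 0%N) (v k.+1)].

End Alg.
End SEMLDefs.

(* Main.v *)
Require Import Defs.
From HB Require Import structures.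
From mathcomp Require Import all_boot all_order all_algebra.
From mathcomp Require Import all_classical all_reals all_analysis.
From mathcomp Require Import ring lra.
Import Order.TTheory GRing.Theory Num.Theory.
Import numFieldNormedType.Exports.
Local Open Scope classical_set_scope.
Local Open Scope ring_scope.

Lemma dual0 {R : realType} {E : normedModType R} {phi : E -> R} :
  is_dual_elem phi -> phi 0 = 0.
Proof.
move=> [lin _]; have := lin 1 0 0; rewrite scale1r addr0 mul1r => /eqP.
by rewrite -subr_eq subrr eq_sym => /eqP.
Qed.

Lemma dualZ {R : realType} {E : normedModType R} {phi : E -> R} a u :
  is_dual_elem phi -> phi (a *: u) = a * phi u.
Proof. move=> h; have := h.1 a u 0; rewrite addr0 dual0 // addr0 //. Qed.

Lemma dualD {R : realType} {E : normedModType R} {phi : E -> R} u w :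
  is_dual_elem phi -> phi (u + w) = phi u + phi w.
Proof. move=> h; have := h.1 1 u w; rewrite scale1r mul1r //. Qed.

Lemma dualN {R : realType} {E : normedModType R} {phi : E -> R} u :
  is_dual_elem phi -> phi (- u) = - phi u.
Proof. move=> h; rewrite -scaleN1r dualZ // mulN1r //. Qed.

Lemma dualB {R : realType} {E : normedModType R} {phi : E -> R} u w :
  is_dual_elem phi -> phi (u - w) = phi u - phi w.
Proof. move=> h; rewrite dualD // dualN //. Qed.

Lemma dual_bound {R : realType} {E : normedModType R} {phi : E -> R} :
  is_dual_elem phi -> exists B : R, 0 <= B /\ forall u, `|phi u| <= B * `|u|.
Proof.
move=> h; have c0 : phi @ (nbhs (0:E)) --> phi 0 := h.2 0.
move: c0 => /cvgrPdist_lt /(_ 1 ltr01) /nbhs_ballP[r r0 Hr].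
exists (2 / r); split; first by rewrite divr_ge0 // ltW.
move=> u; have [->|u0] := eqVneq u 0.
  by rewrite dual0 // !normr0 mulr0.
have nu0 : 0 < `|u| by rewrite normr_gt0.
set s := r / 2 / `|u|.
have s0 : 0 < s by rewrite /s !divr_gt0.
have : `|phi 0 - phi (s *: u)| < 1.
  apply: Hr; rewrite -ball_normE /ball_ /= sub0r normrN normrZ gtr0_norm // /s divfK ?gt_eqF //.
  by rewrite ltr_pdivrMr // ltr_pMr // ltr1n.
rewrite dual0 // sub0r normrN dualZ // normrM gtr0_norm // => H.
have sn : s != 0 by rewrite gt_eqF.
rewrite -[`|phi u|](mulKf sn).
apply: (le_trans (ler_wpM2l _ (ltW H))); first by rewrite invr_ge0 ltW.
rewrite mulr1 /s; rewrite le_eqVlt; apply/orP; left; apply/eqP; field.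
by rewrite !gt_eqF.
Qed.

Lemma dual_unit {R : realType} {E : normedModType R} {phi : E -> R} (B : R) :
  is_dual_elem phi -> (forall u, `|u| <= 1 -> `|phi u| <= B) ->
  forall u, `|phi u| <= B * `|u|.
Proof.
move=> h hb u; have [->|u0] := eqVneq u 0.
  have := hb 0; rewrite normr0 ler01 => /(_ isT); rewrite dual0 // normr0 mulr0 //.
have nu0 : 0 < `|u| by rewrite normr_gt0.
have := hb (`|u|^-1 *: u); rewrite normrZ normrV ?unitfE ?gt_eqF // normr_id mulVf ?gt_eqF //.
move=> /(_ (lexx _)); rewrite dualZ // normrM normrV ?unitfE ?gt_eqF // normr_id => H.
by rewrite -ler_pdivrMr // mulrC.
Qed.

Lemma gp_bdd {R : realType} {E : normedModType R} {g : E -> R} {g' : E -> E -> R} :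
  class_F g g' -> H3 g' -> forall M : R,
  exists B : R, 0 <= B /\ forall a u, `|a| <= M -> `|g' a u| <= B * `|u|.
Proof.
move=> [_ _ hd _] h3 M.
set M' := Num.max M 1.
have M'0 : 0 < M' by rewrite /M' lt_max ltr01 orbT.
have MM' : M <= M' by rewrite /M' le_max lexx.
pose A := [set a : E | `|a| <= M'].
have bA : bdd_set A by exists M'.
have [del [del0 Hdel]] := h3 A bA 1 ltr01.
pose N := Num.bound (M' / del).
have hN : M' / del < N%:R by apply: archi_boundP; rewrite divr_ge0 // ltW.
have N0 : (0 < N)%N.
  by rewrite -(ltr0n R); apply: lt_trans hN; rewrite divr_gt0.
have N0r : 0 < (N%:R : R) by rewrite ltr0n.
have [B0 [B00 HB0]] := dual_bound (hd 0).
have claim : forall i, (i <= N)%N -> forall a, `|a| <= M' -> forall u, `|u| <= 1 ->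
    `|g' ((i%:R / N%:R) *: a) u - g' 0 u| <= i%:R.
  elim=> [|i IH] hi a ha u hu.
    by rewrite mul0r scale0r subrr normr0.
  have hi' : (i <= N)%N by apply: ltnW.
  have inA : forall j, (j <= N)%N -> A ((j%:R / N%:R) *: a).
    move=> j hj; rewrite /A /= normrZ ger0_norm ?divr_ge0 //.
    rewrite -[X in _ <= X]mul1r ler_pM //. 
    by rewrite ler_pdivrMr // mul1r ler_nat.
  set xi := (i%:R / N%:R) *: a.
  have -> : g' ((i.+1%:R / N%:R) *: a) u - g' 0 u =
    (g' ((i.+1%:R / N%:R) *: a) u - g' xi u) + (g' xi u - g' 0 u).
    by rewrite addrA subrK.
  apply: (le_trans (ler_normD _ _)).
  apply: (@le_trans _ _ (1 + i%:R)); last by rewrite -addn1 natrD addrC.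
  apply: lerD; last exact: IH.
  apply: (Hdel _ _ (inA _ hi) (inA _ hi')) => //.
  rewrite -scalerBl -mulrBl -natrB // subSnn mul1r normrZ ger0_norm ?invr_ge0 ?ltW //.
  rewrite mulrC ltr_pdivrMr // (le_lt_trans ha) //.
  by rewrite -ltr_pdivrMl // mulrC.
exists (N%:R + B0); split; first by rewrite addr_ge0 // ltW.
move=> a u ha; apply: dual_unit => // {}u hu.
have := claim N (leqnn _) a (le_trans ha MM') u hu.
rewrite mulfV ?gt_eqF // scale1r => H.
rewrite -(subrK (g' 0 u) (g' a u)); apply: (le_trans (ler_normD _ _)); apply: lerD => //.
by apply: (le_trans (HB0 u)); rewrite -[X in _ <= X]mulr1 ler_wpM2l.
Qed.

Lemma g_convex {R : realType} {E : normedModType R} {g : E -> R} {g' : E -> E -> R} :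
  class_F g g' -> forall a b (t : R), 0 <= t <= 1 ->
  g (t *: a + (1 - t) *: b) <= t * g a + (1 - t) * g b.
Proof.
move=> [hs _ _ _] a b t /andP[t0 t1].
have [->|ab] := eqVneq a b.
  by rewrite -scalerDl -mulrDl addrC subrK scale1r mul1r.
have [->|tn0] := eqVneq t 0.
  by rewrite scale0r mul0r !add0r subr0 scale1r mul1r.
have [->|tn1] := eqVneq t 1.
  by rewrite scale1r mul1r subrr scale0r mul0r !addr0.
apply/ltW/hs; first by apply/eqP.
by rewrite lt_neqAle eq_sym tn0 t0 /= lt_neqAle tn1 t1.
Qed.

Lemma grad_ineq {R : realType} {E : normedModType R} {g : E -> R} {g' : E -> E -> R} :
  class_F g g' -> forall a h, g' a h <= g (a + h) - g a.
Proof.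
move=> hF a h; have hl := (let: And4 _ _ _ x := hF in x) a h.
have sub : (0:R)^'+ `=>` (0:R)^'.
  move=> P /= /nbhs_ballP[r r0 HP]; apply/nbhs_ballP; exists r => // t rt t0.
  by apply: HP => //; rewrite gt_eqF.
have hr := cvg_trans (cvg_app _ sub) hl.
have cl : closed [set x : R | x <= g (a + h) - g a] by exact: closed_le.
suff : [set x : R | x <= g (a + h) - g a] (g' a h) by [].
have := @closed_cvg _ _ _ _ (fun t : R => t^-1 * (g (a + t *: h) - g a)) _ cl.
move=> /(_ _ _ _ _ hr); apply.
near=> t.
have t0 : 0 < t by near: t; exact: nbhs_right_gt.
have t1 : t < 1 by near: t; exact: nbhs_right_lt.
rewrite /= ler_pdivrMl //.
have := g_convex hF (a + h) a t.
rewrite ltW // ltW // => /(_ isT).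
rewrite scalerDr scalerBl scale1r addrC addrA subrK.
move=> H; rewrite lerBlDr; apply: (le_trans H).
rewrite mulrBl mulrBr mul1r; lra.
Unshelve. all: end_near.
Qed.

Lemma Dg_ge0 {R : realType} {E : normedModType R} {g : E -> R} {g' : E -> E -> R} :
  class_F g g' -> forall a b, 0 <= Dg g g' a b.
Proof.
move=> hF a b; have := grad_ineq hF b (a - b).
by rewrite [b + _]addrC subrK /Dg => H; rewrite subr_ge0.
Qed.

Lemma three_point {R : realType} {E : normedModType R} {g : E -> R} {g' : E -> E -> R} :
  class_F g g' -> forall a b c,
  Dg g g' a b = Dg g g' a c + Dg g g' c b + (g' c (a - c) - g' b (a - c)).
Proof.
move=> [_ _ hd _] a b c; rewrite /Dg.
have -> : a - b = (c - b) + (a - c) by rewrite [RHS]addrC addrA subrK.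
rewrite dualD //; ring.
Qed.

Lemma H2ext {R : realType} {E : normedModType R} {g : E -> R} {g' : E -> E -> R} :
  class_F g g' -> H2 g g' -> forall (A : set E) (t : R), bdd_set A -> 0 < t ->
  exists c : R, 0 < c /\ forall a b, A a -> t <= `|b - a| -> c <= Dg g g' b a.
Proof.
move=> hF h2 A t bA t0; have [c [c0 Hc]] := h2 A t bA t0.
exists c; split => // a b Aa hab.
have s0 : 0 < `|b - a| by apply: lt_le_trans hab.
set l := t / `|b - a|.
have l0 : 0 <= l by rewrite divr_ge0 // ltW.
have l1 : l <= 1 by rewrite ler_pdivrMr // mul1r.
have e1 : l *: b + (1 - l) *: a - a = l *: (b - a).
  by rewrite scalerBl scale1r scalerBr addrCA addrC addrK.
have := Hc a (l *: b + (1 - l) *: a) Aa.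
rewrite e1 normrZ ger0_norm // divfK ?gt_eqF // => /(_ erefl) H.
apply: (le_trans H); rewrite /Dg e1.
have [_ _ hd _] := hF.
have Hd : g' a (l *: (b - a)) = l * g' a (b - a) by rewrite dualZ.
rewrite Hd.
have := g_convex hF b a l; rewrite l0 l1 => /(_ isT) Hg.
have D0 := Dg_ge0 hF b a; rewrite /Dg in D0.
move: Hg D0.
set gb' := g (l *: b + (1 - l) *: a).
set G := g' a (b - a) => Hg D0.
apply: (@le_trans _ _ (l * (g b - g a - G))).
  have -> : l * (g b - g a - G) = l * g b - l * g a - l * G by ring.
  move: Hg; rewrite mulrBl mul1r; lra.
by rewrite -[X in _ <= X]mul1r ler_wpM2r.
Qed.

Lemma seqcons {R : realType} {E : normedModType R} {g : E -> R} {g' : E -> E -> R} :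
  class_F g g' -> H2 g g' -> forall (a b : nat -> E), bdd_seq a ->
  (fun k => Dg g g' (b k) (a k)) @ \oo --> (0 : R) ->
  (fun k => `|b k - a k|) @ \oo --> (0 : R).
Proof.
move=> hF h2 a b [M hM] hD; apply/cvgrPdist_lt => eps e0.
have bA : bdd_set (range a) by exists M => _ [k _ <-].
have [c [c0 Hc]] := H2ext hF h2 _ _ bA e0.
move/cvgrPdist_lt: hD => /(_ c c0); apply: filterS => k.
rewrite !sub0r !normrN normr_id ger0_norm; last exact: Dg_ge0.
move=> Hk; rewrite ltNge; apply/negP => H.
by have := Hc (a k) (b k) (ex_intro2 _ _ k I erefl) H; rewrite leNgt Hk.
Qed.

Lemma key_ineq {R : realType} {epsi gam D A C B n : R} :
  0 < epsi -> epsi <= gam -> 0 <= D -> A - C <= - (gam * D) ->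
  `|A| <= B * n -> `|C| <= B * n -> D <= (2 * B / epsi) * n.
Proof.
move=> e0 eg D0 h hA hC.
rewrite mulrAC ler_pdivlMr //.
have h1 : epsi * D <= gam * D by rewrite ler_wpM2r.
have h2 := ler_norm (- A); have h3 := ler_norm C; rewrite normrN in h2.
rewrite [D * _]mulrC; lra.
Qed.

Lemma squeeze0 {R : realType} (u h : nat -> R) :
  (forall k, 0 <= u k <= h k) -> h @ \oo --> (0 : R) -> u @ \oo --> (0 : R).
Proof.
move=> hu hh; apply: (@squeeze_cvgr _ _ _ _ (fun _ => 0) h) => //.
  by near=> k; apply: hu.
exact: cvg_cst.
Unshelve. all: end_near.
Qed.

Theorem lemma3p9 (R : realType) (E Y : completeNormedModType R)
  (K : set E) (C : set Y) (f : E -> E -> Y) (T : E -> set E)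
  (g : E -> R) (g' : E -> E -> R)
  (delta theta betahat betatil epsi : R) (beta gamma : nat -> R)
  (e : nat -> Y) (ebar : Y)
  (x z y w v : nat -> E) (ell : nat -> nat) :
  K !=set0 -> closed K -> cvx_set K ->
  good_cone C ->
  class_F g g' -> H1 g g' -> H2 g g' -> H3 g' -> H4 g ->
  B1 f -> B2 f -> B3 C f -> B4 K T g g' ->
  SEML_params C delta theta betahat betatil epsi beta gamma e ebar ->
  SEML_seq K C f T g g' delta theta beta gamma e x z y w v ell ->
  bdd_seq x -> bdd_seq v -> bdd_seq w ->
  [/\ (fun k => `|v k.+1 - v k|) @ \oo --> (0 : R),
      (fun k => `|v k - x k|) @ \oo --> (0 : R)
    & (fun k => `|x k - w k|) @ \oo --> (0 : R)].
Proof.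
move=> _ _ _ _ hF _ h2 h3 _ _ _ _ _ [_ _ _ [/andP[ep0 _] hgam] _] [_ hseq] bx bv bw.
have hd : forall a, is_dual_elem (g' a) by case: hF.
move: (bx) (bv) (bw) => [Mx hx] [Mv hv] [Mw hw].
set M := Num.max Mx (Num.max Mv Mw).
have hx' : forall k, `|x k| <= M.
  by move=> k; rewrite /M !le_max hx.
have hv' : forall k, `|v k| <= M.
  by move=> k; rewrite /M !le_max hv !orbT.
have hw' : forall k, `|w k| <= M.
  by move=> k; rewrite /M !le_max hw !orbT.
have [B [B0 hB]] := gp_bdd hF h3 M.
have mem : forall k, [/\ Lset g g' gamma x w k (v k.+1), Mset g g' gamma x v k (v k.+1)
    & Nset g' v k (v k.+1)].
  by move=> k; have [_ [_ _ [[[hL hM] hN] _]]] := hseq k.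
pose d k := Dg g g' (v k) (v 0%N).
have inc : forall k, Dg g g' (v k.+1) (v k) <= d k.+1 - d k.
  move=> k; rewrite /d (three_point hF (v k.+1) (v 0%N) (v k)).
  have [_ _ hN] := mem k; rewrite /Nset /= in hN; lra.
have ndd : nondecreasing_seq d.
  apply/nondecreasing_seqP => k; have := inc k; have := Dg_ge0 hF (v k.+1) (v k); lra.
have ub : has_ubound (range d).
  exists (4 * B * M) => _ [k _ <-].
  have := grad_ineq hF (v k) (v 0%N - v k); rewrite [v k + _]addrC subrK => h1.
  have b1 := hB (v k) (v 0%N - v k) (hv' k).
  have b2 := hB (v 0%N) (v k - v 0%N) (hv' 0%N).
  have n1 := ler_norm (- g' (v k) (v 0%N - v k)); rewrite normrN in n1.
  have n2 := ler_norm (- g' (v 0%N) (v k - v 0%N)); rewrite normrN in n2.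
  have n3 : `|v 0%N - v k| <= 2 * M.
    by apply: (le_trans (ler_normB _ _)); have := hv' k; have := hv' 0%N; lra.
  have n4 : `|v k - v 0%N| <= 2 * M by rewrite distrC.
  have m1 : B * `|v 0%N - v k| <= B * (2 * M) by rewrite ler_wpM2l.
  have m2 : B * `|v k - v 0%N| <= B * (2 * M) by rewrite ler_wpM2l.
  rewrite /d /Dg; lra.
have hl := nondecreasing_cvgn ndd ub.
have hl1 : [sequence d n.+1]_n @ \oo --> sup (range d) by rewrite cvg_shiftS.
have hdiff : ([sequence d n.+1]_n - d) @ \oo --> (0:R).
  rewrite -(subrr (sup (range d))); exact: cvgB.
have hDv : (fun k => Dg g g' (v k.+1) (v k)) @ \oo --> (0 : R).
  apply: (squeeze0 _ _ _ hdiff) => k; rewrite Dg_ge0 //=; exact: inc.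
have r1 := seqcons hF h2 v (fun k => v k.+1) bv hDv.
have hDx : (fun k => Dg g g' (v k) (x k)) @ \oo --> (0 : R).
  have hc : (fun k => (2 * B / epsi) * `|v k.+1 - v k|) @ \oo --> (0:R).
    rewrite -(mulr0 (2 * B / epsi)); exact: cvgMl_tmp.
  apply: (squeeze0 _ _ _ hc) => k; rewrite Dg_ge0 //=.
  have [_ hM _] := mem k; rewrite /Mset /= in hM.
  have [hg1 _] := andP (hgam k).
  apply: (key_ineq ep0 hg1 (Dg_ge0 hF _ _) hM); exact: hB.
have r2 := seqcons hF h2 x v bx hDx.
have hDw : (fun k => Dg g g' (x k) (w k)) @ \oo --> (0 : R).
  have hc : (fun k => (2 * B / epsi) * (`|v k.+1 - v k| + `|v k - x k|)) @ \oo --> (0:R).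
    rewrite -(mulr0 (2 * B / epsi)) -(addr0 0); apply: cvgMl_tmp; exact: cvgD.
  apply: (squeeze0 _ _ _ hc) => k; rewrite Dg_ge0 //=.
  have [hL _ _] := mem k; rewrite /Lset /= in hL.
  have [hg1 _] := andP (hgam k).
  have := key_ineq ep0 hg1 (Dg_ge0 hF _ _) hL (hB _ _ (hx' k)) (hB _ _ (hw' k)).
  move=> H; apply: (le_trans H); rewrite ler_wpM2l //.
    by rewrite divr_ge0 ?mulr_ge0 // ltW.
  have -> : v k.+1 - x k = (v k.+1 - v k) + (v k - x k) by rewrite addrA subrK.
  exact: ler_normD.
have r3 := seqcons hF h2 w x bw hDw.
by split.
Qed.
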